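(* Let $\mathfrak{H}$ be a hereditary homomorph of finite groups and $\mathfrak{F}=v^*\mathfrak{H}$. Let $p\neq q$ be primes and $k\ge 1$. If $E(q^k|p)\in\mathfrak{F}$, then $E(q^t|p)\in\mathfrak{F}$ for all $0\le t\le k$.
   Context: All groups are finite. A homomorph is a class closed under epimorphic images; hereditary means closed under subgroups. A subgroup $H$ of $G$ is $K$-$\mathfrak{H}$-subnormal if there is a chain $H=H_0\le\dots\le H_n=G$ with, for each $i$, $H_{i-1}\trianglelefteq H_i$ or $H_i/\mathrm{Core}_{H_i}(H_{i-1})\in\mathfrak{H}$; $v^*\mathfrak{H}$ is the class of groups all of whose cyclic subgroups of prime power order are $K$-$\mathfrak{H}$-subnormal. For a prime $p$ and a natural number $n$, $E(n|p)$ denotes the (unique up to isomorphism) group $G$ having an abelian normal subgroup $A$ of exponent $p$ with a complement $C\cong Z_n$ acting faithfully and indecomposably on $A$ (so $E(1|p)\cong Z_p$). *)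

(* Defs.v *)
From HB Require Import structures.
From mathcomp Require Import all_boot all_fingroup all_solvable.
Set Implicit Arguments. Unset Strict Implicit. Unset Printing Implicit Defensive.
Local Open Scope group_scope.

Definition group_class := forall gT : finGroupType, {group gT} -> Prop.

(* Homomorph: closed under epimorphic images (this includes isomorphic copies). *)
Definition homomorph (hH : group_class) : Prop :=
  forall (gT rT : finGroupType) (G : {group gT}) (f : {morphism G >-> rT}),
    hH gT G -> hH rT (f @* G)%G.

Definition hereditary (hH : group_class) : Prop :=
  forall (gT : finGroupType) (G K : {group gT}),
    hH gT G -> K \subset G -> hH gT K.

(* K-H-subnormality: a chain H = H_0 <= H_1 <= ... <= H_n = G where each step
   H_{i-1} <= H_i satisfies H_{i-1} <| H_i or H_i / Core_{H_i}(H_{i-1}) \in hH.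
   Core_{H_i}(H_{i-1}) is mathcomp's gcore. *)
Inductive KHsubnormal (hH : group_class) (gT : finGroupType) (G : {group gT})
  : {group gT} -> Prop :=
| KHsn_refl : KHsubnormal hH G G
| KHsn_step (H K : {group gT}) :
    H \subset K ->
    (H <| K \/ hH _ (K / gcore H K)%G) ->
    KHsubnormal hH G K -> KHsubnormal hH G H.

Definition vstar (hH : group_class) : group_class :=
  fun gT G => forall (p : nat) (x : gT), prime p -> x \in G -> p.-elt x ->
    KHsubnormal hH G <[x]>%G.

(* G is (isomorphic to) E(n|p): G = A ><| C with A an abelian normal subgroup
   of exponent p, C cyclic of order n acting faithfully on A, and A
   indecomposable as a C-module (A nontrivial and not the direct product of
   two nontrivial C-invariant subgroups). *)
Definition is_E (gT : finGroupType) (G : {group gT}) (n p : nat) : Prop :=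
  exists A C : {group gT},
    [/\ A ><| C = G, A <| G, abelian A & exponent A = p] /\
    [/\ cyclic C, #|C| = n, 'C_C(A) = 1, A :!=: 1 &
        (forall B1 B2 : {group gT}, B1 \x B2 = A ->
           C \subset 'N(B1) -> C \subset 'N(B2) -> B1 :==: 1 \/ B2 :==: 1)].

Arguments vstar hH gT G : clear implicits.

(* Main.v *)
Require Import Defs.
From mathcomp Require Import all_boot all_fingroup all_solvable.
From mathcomp Require Import zify.
Set Implicit Arguments. Unset Strict Implicit. Unset Printing Implicit Defensive.
Local Open Scope group_scope.

Lemma irrA (rT : finGroupType) (E A C B : {group rT}) (p : nat) :
  prime p -> A ><| C = E -> abelian A -> exponent A = p ->
  coprime p #|C| ->
  (forall B1 B2 : {group rT}, B1 \x B2 = A ->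
     C \subset 'N(B1) -> C \subset 'N(B2) -> B1 :==: 1 \/ B2 :==: 1) ->
  B \subset A -> C \subset 'N(B) -> B :!=: 1 -> B :=: A.
Proof.
move=> pp defE abA expA coC indec sBA nBC ntB.
have [nsAE sCE defAC nAC tiAC] := sdprod_context defE.
have sAE := normal_sub nsAE.
have nBE : E \subset 'N(B).
  by rewrite -defAC mul_subG // sub_abelian_norm.
have nsBE : B <| E by rewrite /normal (subset_trans sBA sAE) nBE.
have pA : p.-group A by rewrite -pnat_exponent expA pnat_id.
have abelA : p.-abelem A by rewrite abelemE // abA expA dvdnn.
have abB : abelian B := abelianS sBA abA.
have coB : coprime #|B| #|E : A|.
  rewrite -(index_sdprod defE).
  have pB : p.-group B := pgroupS sBA pA.
  apply: (pnat_coprime pB); rewrite p'natE //.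
  by rewrite -prime_coprime.
have := Gaschutz_split nsBE sBA sAE abB coB.
rewrite (abelem_splits abelA sBA) => /splitsP [K /complP [tiBK defBK]].
have sKE : K \subset E by rewrite -defBK mulG_subr.
have defA : B * (K :&: A) = A.
  by rewrite group_modl // defBK; apply/setIidPr.
have cA : K :&: A \subset 'C(B).
  by rewrite (subset_trans (subsetIr _ _)) // (centSS _ sBA abA).
have tiBKA : B :&: (K :&: A) = 1.
  by apply/trivgP; rewrite -tiBK setIS // subsetIl.
have dB : B \x (K :&: A) = A by rewrite dprodE.
have nKAE : E \subset 'N(K :&: A).
  rewrite -defBK mul_subG //.
    by rewrite (subset_trans sBA) // sub_abelian_norm // subsetIr.
  by rewrite normsI ?normG // (subset_trans sKE) // normal_norm.
case: (indec _ _ dB nBC (subset_trans sCE nKAE)) => /eqP H; first by rewrite H eqxx in ntB.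
by move: defA; rewrite H mulg1.
Qed.

Lemma step_hH (hH : group_class) (gT : finGroupType) (E H : {group gT}) :
  homomorph hH -> hH gT E -> H \subset E -> KHsubnormal hH E H.
Proof.
move=> hom hE sHE.
apply: (KHsn_step sHE); last exact: KHsn_refl.
right.
have nNE : E \subset 'N(gcore H E) by apply: normal_norm; apply: gcore_normal.
have := hom _ _ E (restrm nNE (coset (gcore H E))) hE.
suff -> : (E / gcore H E)%G = (restrm nNE (coset (gcore H E)) @* E)%G by [].
by apply: val_inj; rewrite /= morphim_restrm setIid.
Qed.

Lemma normal_KH (hH : group_class) (gT : finGroupType) (E H : {group gT}) :
  H <| E -> KHsubnormal hH E H.
Proof.
move=> nHE; apply: (KHsn_step (normal_sub nHE)); [by left | exact: KHsn_refl].
Qed.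

Definition tf (rT : finGroupType) (m : nat) (z : rT) (x : 'I_m * rT) : 'I_m * rT :=
  (ordS x.1, if x.1.+1 == m then x.2 * z else x.2).

Lemma tf_inj (rT : finGroupType) (m : nat) (z : rT) : injective (@tf rT m z).
Proof.
move=> [i g] [j h] E; have /= /ordS_inj eij := f_equal fst E; subst j.
have /= := f_equal snd E; by case: ifP => _ => [/mulIg|] ->.
Qed.

Definition tau (rT : finGroupType) (m : nat) (z : rT) : {perm 'I_m * rT} := perm (@tf_inj rT m z).

Definition ec (rT : finGroupType) (m : nat) (s : {perm 'I_m * rT}) (i : 'I_m) : rT := (s (i, 1)).2.

Definition Dset (rT : finGroupType) (m : nat) : {set {perm 'I_m * rT}} :=
  [set s : {perm 'I_m * rT} | [forall x : 'I_m * rT, s x == (x.1, x.2 * ec s x.1)]].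

Lemma DP (rT : finGroupType) (m : nat) (s : {perm 'I_m * rT}) :
  reflect (forall i g, s (i, g) = (i, g * ec s i)) (s \in Dset rT m).
Proof.
rewrite inE; apply: (iffP forallP) => [H i g | H [i g]].
  by apply/eqP; apply: (H (i, g)).
by apply/eqP; apply: H.
Qed.

Lemma ec_mul (rT : finGroupType) (m : nat) (s t : {perm 'I_m * rT}) i :
  s \in Dset rT m -> t \in Dset rT m -> ec (s * t) i = ec s i * ec t i.
Proof.
move=> /DP Ds /DP Dt; rewrite /ec permM Ds mul1g Dt //.
Qed.

Lemma D_group_set (rT : finGroupType) (m : nat) : group_set (Dset rT m).
Proof.
apply/group_setP; split.
  by apply/DP => i g; rewrite /ec !perm1 mulg1.
move=> s t Ds Dt; apply/DP => i g.
rewrite (ec_mul _ Ds Dt) permM.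
by move/DP: Ds => ->; move/DP: Dt => ->; rewrite mulgA.
Qed.

Canonical D_group (rT : finGroupType) (m : nat) := group (D_group_set rT m).

Lemma D_eq (rT : finGroupType) (m : nat) (s t : {perm 'I_m * rT}) :
  s \in Dset rT m -> t \in Dset rT m -> (forall i, ec s i = ec t i) -> s = t.
Proof.
move=> /DP Ds /DP Dt H; apply/permP => [[i g]].
by rewrite Ds Dt H.
Qed.

Lemma ec1 (rT : finGroupType) (m : nat) i : ec (1 : {perm 'I_m * rT}) i = 1.
Proof. by rewrite /ec perm1. Qed.

Lemma ecX (rT : finGroupType) (m : nat) (s : {perm 'I_m * rT}) i n :
  s \in Dset rT m -> ec (s ^+ n) i = ec s i ^+ n.
Proof.
move=> Ds; elim: n => [|n IH]; first by rewrite !expg0 ec1.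
have Dsn : s ^+ n \in D_group rT m by rewrite groupX.
by rewrite !expgSr (ec_mul _ Dsn Ds) IH.
Qed.

Lemma ecV (rT : finGroupType) (m : nat) (s : {perm 'I_m * rT}) i :
  s \in Dset rT m -> ec (s^-1) i = (ec s i)^-1.
Proof.
move=> Ds; have DsV : s^-1 \in D_group rT m by rewrite groupV.
apply/eqP; rewrite eq_mulgV1 invgK -(ec_mul _ DsV Ds) mulVg ec1 //.
Qed.

Lemma ec_conj (rT : finGroupType) (m : nat) (s t : {perm 'I_m * rT}) i :
  s \in Dset rT m -> t \in Dset rT m -> ec (s ^ t) i = (ec s i) ^ (ec t i).
Proof.
move=> Ds Dt; have DtV : t^-1 \in D_group rT m by rewrite groupV.
have Dst : s * t \in D_group rT m by rewrite groupM.
by rewrite /conjg (ec_mul _ DtV) ?groupM // (ec_mul _ Ds Dt) (ecV _ Dt).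
Qed.

Lemma tauX (rT : finGroupType) (m : nat) (z : rT) (x : 'I_m * rT) n :
  (((tau m z) ^+ n) x).1 = (x.1 + n) %% m :> nat /\
  (((tau m z) ^+ n) x).2 = x.2 * z ^+ ((x.1 + n) %/ m).
Proof.
case: x => i g /=; have m_gt0 : 0 < m by case: m i => // -[].
elim: n => [|n [IH1 IH2]].
  by rewrite expg0 perm1 /= addn0 modn_small ?divn_small ?expg0 ?mulg1.
rewrite expgSr permM /tau permE /tf /=.
set y := (tau m z ^+ n) (i, g) in IH1 IH2 *.
have Ej : (y.1.+1 == m) = (m %| (i + n).+1).
  have E0 : (i + n).+1 = (i + n) %/ m * m + ((i + n) %% m).+1.
    by rewrite addnS -divn_eq.
  rewrite IH1 E0 dvdn_addr ?dvdn_mull //; apply/eqP/idP => [->|dv] //.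
  apply/eqP; rewrite eqn_leq (dvdn_leq _ dv) // andbT.
  by rewrite ltn_pmod.
split.
  by rewrite /= IH1 addnS; rewrite -addn1 modnDml addn1.
rewrite addnS (divnS _ m_gt0) -Ej IH2.
by case: ifP => _; rewrite /= ?add0n // add1n expgSr mulgA.
Qed.

Lemma tau_m (rT : finGroupType) (m : nat) (z : rT) i g :
  ((tau m z) ^+ m) (i, g) = (i, g * z).
Proof.
have m_gt0 : 0 < m by case: m i => // -[].
have [H1 H2] := tauX z (i, g) m.
move: H1 H2; case: ((tau m z ^+ m) (i, g)) => j h /= H1 ->.
rewrite modnDr modn_small // in H1.
have -> : j = i by apply: val_inj.
by rewrite divnDr // divn_small // divnn m_gt0 expg1.
Qed.

Lemma tau_m_D (rT : finGroupType) (m : nat) (z : rT) :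
  (tau m z) ^+ m \in Dset rT m.
Proof. by apply/DP => i g; rewrite /ec !tau_m mul1g. Qed.

Lemma ec_tau_m (rT : finGroupType) (m : nat) (z : rT) i :
  ec ((tau m z) ^+ m) i = z.
Proof. by rewrite /ec tau_m mul1g. Qed.

Lemma conj_tau (rT : finGroupType) (m : nat) (z : rT) (s : {perm 'I_m * rT}) i' g :
  s \in Dset rT m ->
  (s ^ tau m z) (i', g) =
  (i', g * (if (ord_pred i').+1 == m then (ec s (ord_pred i')) ^ z else ec s (ord_pred i'))).
Proof.
move=> /DP Ds; set j := ord_pred i'.
have -> : i' = ordS j by rewrite /j ord_predK.
set w := if j.+1 == m then z^-1 else 1.
have Ey : (ordS j, g) = tau m z (j, g * w).
  by rewrite permE /tf /= /w; case: (j.+1 == m); rewrite ?mulg1 // mulgKV.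
rewrite {1}Ey conjgE !permM permK Ds permE /tf /= /w.
by case: (j.+1 == m); rewrite ?mul1g ?mulg1 // /conjg !mulgA.
Qed.

Definition Vset (rT : finGroupType) (m : nat) (A : {set rT}) : {set {perm 'I_m * rT}} :=
  [set s in Dset rT m | [forall i, ec s i \in A]].

Lemma V_group_set (rT : finGroupType) (m : nat) (A : {group rT}) : group_set (Vset m A).
Proof.
apply/group_setP; split.
  by apply/setIdP; split; [exact: (group1 (D_group rT m)) | apply/forallP => i; rewrite ec1].
move=> s t /setIdP [Ds /forallP As] /setIdP [Dt /forallP At].
have Dst : s * t \in D_group rT m by rewrite groupM.
apply/setIdP; split => //; apply/forallP => i.
by rewrite (ec_mul _ Ds Dt) groupM.
Qed.

Canonical V_group (rT : finGroupType) (m : nat) (A : {group rT}) :=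
  group (V_group_set m A).

Lemma V_D (rT : finGroupType) (m : nat) (A : {group rT}) : Vset m A \subset Dset rT m.
Proof. by apply/subsetP => s /setIdP []. Qed.

Lemma ec_V (rT : finGroupType) (m : nat) (A : {group rT}) s i :
  s \in Vset m A -> ec s i \in A.
Proof. by move=> /setIdP [_ /forallP]. Qed.

Lemma tau_norm_V (rT : finGroupType) (m : nat) (z : rT) (A : {group rT}) :
  z \in 'N(A) -> tau m z \in 'N(Vset m A).
Proof.
move=> nAz; apply/normP/eqP; rewrite eqEcard cardJg leqnn andbT.
apply/subsetP => _ /imsetP [s Vs ->].
have Ds := subsetP (V_D m A) s Vs.
have Dst : s ^ tau m z \in Dset rT m.
  apply/DP => i g; rewrite /ec !conj_tau // mul1g //.
apply/setIdP; split => //; apply/forallP => i.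
rewrite /ec conj_tau // mul1g.
case: ifP => _; last exact: ec_V Vs.
by rewrite memJ_norm // (ec_V _ Vs).
Qed.

Definition rmf (rT : finGroupType) (m : nat) (a : rT) (x : 'I_m * rT) : 'I_m * rT :=
  (x.1, x.2 * a).
Lemma rmf_inj (rT : finGroupType) (m : nat) (a : rT) : injective (@rmf rT m a).
Proof. by move=> [i g] [j h] [-> /mulIg ->]. Qed.
Definition rmul (rT : finGroupType) (m : nat) (a : rT) : {perm 'I_m * rT} := perm (@rmf_inj rT m a).
Lemma rmul_D (rT : finGroupType) (m : nat) (a : rT) : rmul m a \in Dset rT m.
Proof. by apply/DP => i g; rewrite /ec !permE /rmf /= mul1g. Qed.
Lemma ec_rmul (rT : finGroupType) (m : nat) (a : rT) i : ec (rmul m a) i = a.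
Proof. by rewrite /ec permE /rmf /= mul1g. Qed.

Lemma hH_E (hH : group_class) (p q k t : nat) (rT : finGroupType) (E A C : {group rT}) :
  homomorph hH -> hereditary hH -> prime p -> prime q -> p != q -> 0 < t -> t <= k ->
  (forall (gT : finGroupType) (G : {group gT}), is_E G (q ^ k)%N p -> vstar hH gT G) ->
  A ><| C = E -> abelian A -> exponent A = p -> cyclic C -> #|C| = (q ^ t)%N ->
  'C_C(A) = 1 -> A :!=: 1 ->
  (forall B1 B2 : {group rT}, B1 \x B2 = A ->
     C \subset 'N(B1) -> C \subset 'N(B2) -> B1 :==: 1 \/ B2 :==: 1) ->
  hH rT E.
Proof.
move=> hom her pp pq npq t_gt0 tk hyp defE abA expA cycC oC cCA ntA indec.
have [nsAE sCE defAC nAC tiAC] := sdprod_context defE.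
have q_gt1 : 1 < q by apply: prime_gt1.
have coC : coprime p #|C|.
  by rewrite oC coprime_pexpr // prime_coprime // dvdn_prime2.
have irr := irrA pp defE abA expA coC indec.
have [z defC] := cyclicP cycC.
have Cz : z \in C by rewrite defC cycle_id.
have oz : #[z] = (q ^ t)%N by rewrite -oC defC.
have nAz : z \in 'N(A) := subsetP nAC z Cz.
pose m := (q ^ (k - t))%N.
have m_gt0 : 0 < m by rewrite expn_gt0 prime_gt0.
pose i0 := Ordinal m_gt0.
pose tau0 := tau m z.
pose D := D_group rT m.
pose V := V_group m A.
have nVtau : tau0 \in 'N(V) := tau_norm_V m nAz.
have sVD : V \subset D := V_D m A.
have taumj j : tau0 ^+ (m * j)%N \in D /\ forall i, ec (tau0 ^+ (m * j)%N) i = z ^+ j.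
  rewrite expgM; have Dm : tau0 ^+ m \in D := tau_m_D m z.
  by split; [rewrite groupX | move=> i; rewrite ecX // ec_tau_m].
have qk : (q ^ k)%N = (m * q ^ t)%N by rewrite -expnD subnK.
have qk1 : (q ^ k.-1)%N = (m * q ^ t.-1)%N.
  by rewrite -expnD; congr (_ ^ _)%N; lia.
have z_ne : z ^+ (q ^ t.-1)%N != 1.
  rewrite -order_dvdn oz; apply/negP => dv.
  have := dvdn_leq _ dv; rewrite expn_gt0 prime_gt0 // leqNgt ltn_exp2l //.
  by rewrite ltn_predL t_gt0 => /(_ isT).
have ot : #[tau0] = (q ^ k)%N.
  have dv : #[tau0] %| (q ^ k)%N.
    rewrite order_dvdn qk; have [Dt et] := taumj (q ^ t)%N.
    apply/eqP; apply: (D_eq Dt (group1 D)) => i.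
    by rewrite et ec1 -oz expg_order.
  have [j jk ej] := dvdn_pfactor _ _ pq dv.
  rewrite ej; case: (ltngtP j k) => [jlt|kj|->] //; last by rewrite ltnNge jk in kj.
  have : tau0 ^+ (q ^ k.-1)%N != 1.
    rewrite qk1; have [Dt et] := taumj (q ^ t.-1)%N.
    by apply: contra z_ne => /eqP e1; rewrite -(et i0) e1 ec1.
  move/negP => H; exfalso; apply: H; rewrite -order_dvdn ej dvdn_exp2l //.
  by rewrite -ltnS prednK // (leq_trans t_gt0 tk).
have [a Aa nta] := trivgPn _ ntA.
have Vra : rmul m a \in V.
  apply/setIdP; split; first exact: rmul_D.
  by apply/forallP => i; rewrite ec_rmul.
have ntV : V :!=: 1.
  apply/trivgPn; exists (rmul m a) => //.
  by apply: contra nta => /eqP e; rewrite -(ec_rmul a i0) e ec1.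
pose gP := fun B : {group {perm 'I_m * rT}} => [&& B :!=: 1, B \subset V & tau0 \in 'N(B)].
have gPV : gP V by rewrite /gP ntV subxx nVtau.
have [W minW sWV0] := mingroup_exists gPV.
have [/and3P [ntW sWV nWtau] minW'] := mingroupP minW.
have sWD : W \subset D := subset_trans sWV sVD.
have nWt : <[tau0]> \subset 'N(W) by rewrite cycle_subG.
have tiVt : V :&: <[tau0]> = 1.
  apply/trivgP/subsetP => x /setIP [Vx /cycleP [n ex0]]; subst x.
  have Dx := subsetP sVD _ Vx.
  have [H1 _] := tauX z (i0, 1) n.
  move/DP: (Dx) => /(_ i0 1) ex; rewrite -/tau0 ex /= in H1.
  have nm : n = (m * (n %/ m))%N.
    rewrite add0n in H1; transitivity (n %/ m * m + n %% m)%N; first exact: divn_eq.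
    by rewrite -H1 addn0 mulnC.
  rewrite nm in Dx Vx *; have [_ ez] := taumj (n %/ m)%N.
  rewrite inE; apply/eqP; apply: (D_eq Dx (group1 D)) => i.
  rewrite ec1; suff : ec (tau0 ^+ (m * (n %/ m))%N) i \in A :&: C by rewrite tiAC => /set1P.
  apply/setIP; split.
    exact: ec_V Vx.
  by rewrite ez defC mem_cycle.
have tiWt : W :&: <[tau0]> = 1.
  by apply/trivgP; rewrite -tiVt setSI.
pose G := (W <*> <[tau0]>)%G.
have defG : W ><| <[tau0]> = G by rewrite sdprodEY.
pose zq := z ^+ (q ^ t.-1)%N.
pose y := tau0 ^+ (q ^ k.-1)%N.
have [Dy ey] : y \in D /\ forall i, ec y i = zq by rewrite /y qk1; apply: taumj.
have zqC : zq \in C by rewrite groupX.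
have ny : y \notin 'C(W).
  apply/negP => cy.
  have [w Ww ntw] := trivgPn _ ntW.
  have Dw := subsetP sWD w Ww.
  have : ~~ [forall i, ec w i == 1].
    apply: contra ntw => /forallP H; apply/eqP; apply: (D_eq Dw (group1 D)) => i.
    by rewrite ec1; apply/eqP.
  rewrite negb_forall => /existsP [i nti].
  have cwy : commute w y := esym (centP cy w Ww).
  have cez : commute (ec w i) zq.
    by rewrite /commute -(ey i) -!ec_mul // cwy.
  have sBA : 'C_A[zq] \subset A := subsetIl _ _.
  have nBC : C \subset 'N('C_A[zq]).
    rewrite normsI // (subset_trans _ (normG _)) // sub_cent1.
    exact: subsetP (cyclic_abelian cycC) zq zqC.
  have ntB : 'C_A[zq] != 1.
    apply/trivgPn; exists (ec w i) => //; apply/setIP; split.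
      exact: ec_V (subsetP sWV w Ww).
    by apply/cent1P.
  have eB := irr _ sBA nBC ntB.
  have : zq \in 'C_C(A).
    rewrite inE zqC -sub_cent1 -eB; exact: subsetIr.
  by rewrite cCA => /set1P ez1; move: z_ne; rewrite -/zq ez1 eqxx.
have cW : 'C_<[tau0]>(W) = 1.
  apply/eqP; apply/negPn/negP => ntK.
  have sK : 'C_<[tau0]>(W) \subset <[tau0]> := subsetIl _ _.
  have dK : #|'C_<[tau0]>(W)| %| (q ^ k)%N by rewrite -ot cardSg.
  have [j jk ej] := dvdn_pfactor _ _ pq dK.
  have qK : q %| #|'C_<[tau0]>(W)|.
    rewrite ej; case: j {jk} ej => [|j] ej; last by rewrite expnS dvdn_mulr.
    by move: ntK; rewrite -cardG_gt1 ej.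
  have [x Kx ox] := Cauchy pq qK.
  have oy : #[y] = q.
    rewrite /y orderXdiv ot ?dvdn_exp2l ?leq_pred // -{1}(prednK (leq_trans t_gt0 tk)).
    by rewrite expnS mulnK // expn_gt0 prime_gt0.
  have : <[x]> == <[y]> :> {set _}.
    rewrite (eq_subG_cyclic (cycle_cyclic tau0)) ?cycle_subG ?mem_cycle //.
      by rewrite -!orderE ox oy.
    exact: subsetP sK x Kx.
  move/eqP => exy; move: ny; rewrite -cycle_subG -exy.
  by rewrite cycle_subG; move/setIP: Kx => [_ ->].
have [nsWG stG defWt _ _] := sdprod_context defG.
have expV : exponent V %| p.
  apply/exponentP => s Vs; have Ds := subsetP sVD s Vs.
  apply: (D_eq (groupX _ Ds) (group1 D)) => i.
  by rewrite ecX // ec1 -expA expg_exponent // (ec_V _ Vs).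
have expW : exponent W = p.
  have : exponent W %| p := dvdn_trans (exponentS sWV) expV.
  case/primeP: pp => _ /[apply] /orP [/eqP e1|/eqP //].
  by move: ntW; rewrite trivg_exponent e1.
have isE : is_E G (q ^ k)%N p.
  exists W, <[tau0]>%G; split; first split => //.
  - apply: abelianS sWV _; apply/centsP => s Vs u Vu.
    have Ds := subsetP sVD s Vs; have Du := subsetP sVD u Vu.
    apply: (D_eq (groupM Ds Du) (groupM Du Ds)) => i.
    rewrite !ec_mul //; apply: (centsP abA); exact: ec_V.
  split => //; first exact: cycle_cyclic.
  move=> B1 B2 dB nB1 nB2.
  have [_ dB12 cB12 tiB12] := dprodP dB.
  have sB1 : B1 \subset W by rewrite -dB12 mulG_subl.
  have sB2 : B2 \subset W by rewrite -dB12 mulG_subr.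
  case: (eqVneq (B1 :> {set _}) 1) => [e|ntB1]; first by left; apply/eqP.
  right; apply/eqP/trivgP.
  have gB1 : gP B1.
    rewrite /gP ntB1 (subset_trans sB1 sWV) /=.
    by rewrite -cycle_subG.
  have e1 := minW' B1 gB1 sB1.
  by rewrite -tiB12 e1 subsetI sB2 subxx.
have tG : tau0 \in G by rewrite -cycle_subG joing_subr.
have sWG : W \subset G := normal_sub nsWG.
have qt : q.-elt tau0 by rewrite /p_elt ot pnatX pnat_id.
have KH : KHsubnormal hH G <[tau0]>%G := hyp _ G isE q tau0 pq tG qt.
have cent_lemma : forall N : {group _}, N \subset <[tau0]> -> G \subset 'N(N) -> N \subset 'C(W).
  move=> N sNt nNG; apply/commG1P/trivgP.
  rewrite -tiWt; apply: subset_trans (commg_subI (G:=N) (H:=W) _ _) _.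
  - by rewrite subsetI subxx (subset_trans (subset_trans sNt _) (normal_norm nsWG)) ?cycle_subG.
  - by rewrite subsetI subxx (subset_trans sWG).
  by rewrite setIC setIS.
have sub_between : forall K : {group _}, K \subset G -> tau0 \in K ->
    K :=: <[tau0]> \/ K :=: G.
  move=> K sKG tK.
  have stK : <[tau0]> \subset K by rewrite cycle_subG.
  have defK : (K :&: W) * <[tau0]> = K.
    by rewrite group_modr // defWt; apply/setIidPl.
  case: (eqVneq (K :&: W) 1) => [e|ntKW].
    by left; rewrite -defK e mul1g.
  right.
  have gKW : gP (K :&: W)%G.
    rewrite /gP ntKW (subset_trans (subsetIr _ _) sWV) /=.
    by rewrite -cycle_subG normsI // (subset_trans stK (normG _)).
  have e1 := minW' _ gKW (subsetIr _ _).
  by rewrite -defK /= e1 defWt.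
have sKH : forall H, KHsubnormal hH G H -> H \subset G.
  move=> H; elim => [|H1 K1 s1 _ _ IH]; first exact: subxx.
  exact: subset_trans s1 IH.
have tau_ne1 : tau0 != 1.
  apply/eqP => e1; move: ot; rewrite e1 order1 => /esym qk1'.
  have : (q ^ k == q ^ 0)%N by rewrite qk1'.
  rewrite eqn_exp2l // => /eqP k0.
  by move: tk t_gt0; rewrite k0 leqn0 => /eqP ->.
have ntt : ~ (<[tau0]> \subset 'C(W)).
  move=> ctW; move: tau_ne1; apply/negP/negPn.
  have : tau0 \in 'C_<[tau0]>(W) by rewrite inE cycle_id -cycle_subG.
  by rewrite cW => /set1P ->.
have chain : forall H, KHsubnormal hH G H -> H :=: <[tau0]> ->
    hH _ (G / gcore <[tau0]> G)%G.
  move=> H; elim => [|H1 K1 s1 hstep kh IH] eH.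
    by move: ntW; rewrite -(setIidPl sWG) eH tiWt eqxx.
  have sKG := sKH _ kh.
  have tK : tau0 \in K1 by apply: (subsetP s1); rewrite eH cycle_id.
  case: (sub_between K1 sKG tK) => [eK|eK]; first exact: IH eK.
  case: hstep => [nHK|hq].
    exfalso; apply: ntt; apply: (cent_lemma <[tau0]>%G (subxx _)).
    by have := normal_norm nHK; rewrite eK eH.
  have eHg : H1 = <[tau0]>%G by apply: val_inj.
  have eKg : K1 = G by apply: val_inj.
  by move: hq; rewrite eHg eKg.
have hq := chain _ KH (erefl _).
have core1 : gcore <[tau0]> G = 1.
  apply/trivgP; rewrite -cW subsetI gcore_sub.
  apply: cent_lemma; first exact: gcore_sub.
  by apply: normal_norm; apply: gcore_normal; rewrite cycle_subG.
have hG1 : hH _ (G / 1)%G.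
  by move: hq; rewrite core1.
have hG : hH _ G.
  have : (G / 1)%G \isog G by rewrite isog_sym quotient1_isog.
  case/isogP => f _ imf.
  have := hom _ _ _ f hG1.
  have e : (f @* (G / 1))%G = G by apply: val_inj; rewrite /= imf.
  by rewrite e.
have Dtm : tau0 ^+ m \in D := tau_m_D m z.
have nWtm : tau0 ^+ m \in 'N(W) by rewrite groupX // -cycle_subG.
have [w0 Ww0 ntw0] := trivgPn _ ntW.
have Dw0 := subsetP sWD w0 Ww0.
have : ~~ [forall i, ec w0 i == 1].
  apply: contra ntw0 => /forallP H; apply/eqP; apply: (D_eq Dw0 (group1 D)) => i.
  by rewrite ec1; apply/eqP.
rewrite negb_forall => /existsP [i1 nti1].
have fM : {in D &, {morph (fun s => ec s i1) : x y / x * y}}.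
  by move=> x u Dx Du; rewrite /= ec_mul.
pose f := Morphism fM.
have fE : forall x, f x = ec x i1 by [].
pose S := (W <*> <[tau0 ^+ m]>)%G.
have sSG : S \subset G by rewrite join_subG sWG cycle_subG groupX.
have sSD : S \subset D by rewrite join_subG sWD cycle_subG.
have hS := her _ G S hG sSG.
have := hom _ _ S (restrm sSD f) hS.
suff -> : (restrm sSD f @* S)%G = E by [].
apply: val_inj; rewrite /= morphim_restrm setIid /S norm_joinEr ?cycle_subG //.
rewrite morphimMl // morphim_cycle // fE ec_tau_m -defC -defAC.
congr (_ * _).
apply: irr.
- apply/subsetP => _ /morphimP [w Dw Ww ->]; rewrite fE.
  exact: ec_V (subsetP sWV w Ww).
- rewrite defC cycle_subG; apply/normP.
  by rewrite -{1}(ec_tau_m z i1) -fE -(morphimJ f W Dtm) (normP nWtm).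
apply/trivgPn; exists (f w0); first exact: mem_morphim.
by rewrite fE.
Qed.

Local Close Scope group_scope.

Theorem mainTheorem3 (hH : group_class) (p q k : nat) :
  homomorph hH -> hereditary hH ->
  prime p -> prime q -> p != q -> 1 <= k ->
  (forall (gT : finGroupType) (G : {group gT}),
      is_E G (q ^ k) p -> vstar hH gT G) ->
  forall t : nat, t <= k ->
  forall (rT : finGroupType) (E : {group rT}),
    is_E E (q ^ t) p -> vstar hH rT E.
Proof.
move=> hom her pp pq npq k1 hyp t tk rT E
  [A [C [[defE nsAE abA expA] [cycC oC cCA ntA indec]]]].
move=> r x pr Ex rx.
have sxE : (<[x]> \subset E)%g by rewrite cycle_subG.
case: (posnP t) => [t0|t_gt0].
  have [_ _ defAC _ _] := sdprod_context defE.
  have C1 : C = 1%G.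
    by apply: val_inj; apply/eqP; rewrite /= trivg_card1 oC t0 expn0.
  have eAE : A = E by apply: val_inj; rewrite /= -defAC C1 mulg1.
  subst E; apply: normal_KH; rewrite -sub_abelian_normal //.
apply: step_hH => //.
exact: (hH_E hom her pp pq npq t_gt0 tk hyp defE abA expA cycC oC cCA ntA indec).
Qed.
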